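(* Let $(Y,D)$ be binary random variables and $X_0,X_1$ observed random vectors. Consider the binary Roy model with $Y_0$ independent of $X_1$ conditionally on $X_0$ and $Y_1$ independent of $X_0$ conditionally on $X_1$. Fix $(x_0,x_1)$ in the support of $(X_0,X_1)$ and define (assumed well defined) $\underline q^0(x_0)=\inf\{\mathbb P(Y=1\mid X_0=x_0,X_1=\tilde x_1):\tilde x_1\in\mathrm{Supp}(X_1\mid X_0=x_0)\}$, $\underline q^1(x_1)=\inf\{\mathbb P(Y=1\mid X_0=\tilde x_0,X_1=x_1):\tilde x_0\in\mathrm{Supp}(X_0\mid X_1=x_1)\}$, $\bar q^0_{10}(x_0)=\sup\{\mathbb P(Y=1,D=0\mid X_0=x_0,X_1=\tilde x_1):\tilde x_1\in\mathrm{Supp}(X_1\mid X_0=x_0)\}$, $\bar q^1_{11}(x_1)=\sup\{\mathbb P(Y=1,D=1\mid X_0=\tilde x_0,X_1=x_1):\tilde x_0\in\mathrm{Supp}(X_0\mid X_1=x_1)\}$. Writing $\pi=\mathbb P(Y=1\mid X_0=x_0,X_1=x_1)$, sharp bounds for the conditional distributions of potential outcomes are $$\frac{\pi-\underline q^0(x_0)}{1-\underline q^0(x_0)}\le \mathbb P(Y_1=1\mid Y_0=0,X_0=x_0,X_1=x_1)\le \frac{\pi-\bar q^0_{10}(x_0)}{1-\bar q^0_{10}(x_0)},$$ $$\frac{\pi-\underline q^1(x_1)}{1-\underline q^1(x_1)}\le \mathbb P(Y_0=1\mid Y_1=0,X_0=x_0,X_1=x_1)\le \frac{\pi-\bar q^1_{11}(x_1)}{1-\bar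 q^1_{11}(x_1)}.$$
   Context: Binary Roy model: $Y_0,Y_1\in\{0,1\}$ unobserved potential outcomes, $Y=Y_1D+Y_0(1-D)$, and almost surely $Y_1>Y_0\Rightarrow D=1$, $Y_1<Y_0\Rightarrow D=0$. $X_d$ are sector-specific covariates entering $Y_d$ but not $Y_{1-d}$. Sharp means the bounds hold for every $(Y_0,Y_1)$ compatible with the model and the conditional distribution of $(Y,D)$ given $(X_0,X_1)$, and the endpoints are attained by such compatible $(Y_0,Y_1)$. Denominators are assumed nonzero. *)

(* Defs.v *)
From HB Require Import structures.
From mathcomp Require Import all_boot all_order all_algebra.
From mathcomp Require Import boolp classical_sets reals.
Set Implicit Arguments. Unset Strict Implicit. Unset Printing Implicit Defensive.
Import Order.TTheory GRing.Theory Num.Theory.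
Local Open Scope ring_scope.
Local Open Scope classical_set_scope.

(* A conditional law of the latent triple (Y0, Y1, D) given a covariate
   value: m y0 y1 d = P(Y0 = y0, Y1 = y1, D = d | X0 = x0, X1 = x1). *)
Definition tlaw (R : realType) := bool -> bool -> bool -> R.

Definition is_dist (R : realType) (m : tlaw R) : Prop :=
  (forall y0 y1 d, 0 <= m y0 y1 d) /\
  \sum_(y0 : bool) \sum_(y1 : bool) \sum_(d : bool) m y0 y1 d = 1.

Definition prob (R : realType) (m : tlaw R) (E : bool -> bool -> bool -> bool) : R :=
  \sum_(y0 : bool) \sum_(y1 : bool) \sum_(d : bool)
     (if E y0 y1 d then m y0 y1 d else 0).

Definition cprob (R : realType) (m : tlaw R) (E F : bool -> bool -> bool -> bool) : R :=
  prob m (fun y0 y1 d => E y0 y1 d && F y0 y1 d) / prob m F.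

Definition Yobs (y0 y1 d : bool) : bool := if d then y1 else y0.

(* Roy selection: a.s. (Y1 > Y0 => D = 1) and (Y1 < Y0 => D = 0) *)
Definition roy (R : realType) (m : tlaw R) : Prop :=
  forall y0 y1 d : bool,
    (((y0 < y1)%N && ~~ d) || ((y1 < y0)%N && d)) -> m y0 y1 d = 0.

(* Binary Roy model with sector-specific covariates on support S:
   r x0 x1 is the conditional law of (Y0,Y1,D) given (X0,X1)=(x0,x1);
   Y0 _||_ X1 | X0 and Y1 _||_ X0 | X1. *)
Definition roy_ci_model (R : realType) (X0 X1 : Type) (S : set (X0 * X1))
    (r : X0 -> X1 -> tlaw R) : Prop :=
  [/\ (forall x0 x1, S (x0, x1) -> is_dist (r x0 x1) /\ roy (r x0 x1)),
      (forall x0 x1 x1' (v : bool), S (x0, x1) -> S (x0, x1') ->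
          prob (r x0 x1) (fun y0 _ _ => y0 == v) =
          prob (r x0 x1') (fun y0 _ _ => y0 == v)) &
      (forall x0 x0' x1 (v : bool), S (x0, x1) -> S (x0', x1) ->
          prob (r x0 x1) (fun _ y1 _ => y1 == v) =
          prob (r x0' x1) (fun _ y1 _ => y1 == v))].

Definition obs_equiv (R : realType) (X0 X1 : Type) (S : set (X0 * X1))
    (r0 r : X0 -> X1 -> tlaw R) : Prop :=
  forall x0 x1 (y d : bool), S (x0, x1) ->
    prob (r x0 x1) (fun a b c => (Yobs a b c == y) && (c == d)) =
    prob (r0 x0 x1) (fun a b c => (Yobs a b c == y) && (c == d)).

Definition compatible (R : realType) (X0 X1 : Type) (S : set (X0 * X1))
    (r0 r : X0 -> X1 -> tlaw R) : Prop :=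
  roy_ci_model S r /\ obs_equiv S r0 r.

Definition pY1 (R : realType) (m : tlaw R) : R :=
  prob m (fun a b c => Yobs a b c).
Definition pY1D0 (R : realType) (m : tlaw R) : R :=
  prob m (fun a b c => Yobs a b c && ~~ c).
Definition pY1D1 (R : realType) (m : tlaw R) : R :=
  prob m (fun a b c => Yobs a b c && c).

(* conditional supports as sections of the support S of (X0,X1) *)
Definition q0_low (R : realType) (X0 X1 : Type) (S : set (X0 * X1))
    (r0 : X0 -> X1 -> tlaw R) (x0 : X0) : R :=
  inf [set pY1 (r0 x0 t) | t in [set t | S (x0, t)]].
Definition q1_low (R : realType) (X0 X1 : Type) (S : set (X0 * X1))
    (r0 : X0 -> X1 -> tlaw R) (x1 : X1) : R :=
  inf [set pY1 (r0 t x1) | t in [set t | S (t, x1)]].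
Definition q0_10_up (R : realType) (X0 X1 : Type) (S : set (X0 * X1))
    (r0 : X0 -> X1 -> tlaw R) (x0 : X0) : R :=
  sup [set pY1D0 (r0 x0 t) | t in [set t | S (x0, t)]].
Definition q1_11_up (R : realType) (X0 X1 : Type) (S : set (X0 * X1))
    (r0 : X0 -> X1 -> tlaw R) (x1 : X1) : R :=
  sup [set pY1D1 (r0 t x1) | t in [set t | S (t, x1)]].

Definition pY1_given_Y0_0 (R : realType) (m : tlaw R) : R :=
  cprob m (fun _ y1 _ => y1) (fun y0 _ _ => ~~ y0).
Definition pY0_given_Y1_0 (R : realType) (m : tlaw R) : R :=
  cprob m (fun y0 _ _ => y0) (fun _ y1 _ => ~~ y1).

(* Main.v *)
Require Import Defs.
From HB Require Import structures.
From mathcomp Require Import all_boot all_order all_algebra.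
From mathcomp Require Import boolp classical_sets reals ring lra.
Import Order.TTheory GRing.Theory Num.Theory.
Local Open Scope ring_scope.
Local Open Scope classical_set_scope.
Set Implicit Arguments. Unset Strict Implicit.

Lemma distE (R : realType) (m : tlaw R) : is_dist m -> roy m ->
  (0 <= m true true true) /\ (0 <= m true true false) /\ (0 <= m true false true) /\
  (0 <= m true false false) /\ (0 <= m false true true) /\ (0 <= m false true false) /\
  (0 <= m false false true) /\ (0 <= m false false false) /\
  m true false true = 0 /\ m false true false = 0 /\
  m true true true + m true true false + m true false true + m true false false +
  m false true true + m false true false + m false false true + m false false false = 1.
Proof.
move=> [h0 h1] hr; rewrite !big_bool /= in h1.
do 8! (split; first exact: h0).
split; first by apply: hr. split; first by apply: hr. lra.
Qed.


Ltac expand := rewrite /pY1_given_Y0_0 /pY0_given_Y1_0 /cprob /pY1 /pY1D0 /pY1D1 /prob ?big_bool /=.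
Ltac dE H1 H2 := let h := fresh "h" in have h := distE H1 H2;
  move: h => [?[?[?[?[?[?[?[?[?[??]]]]]]]]]].

Lemma ratio_mono (R : realType) (p a q : R) : p <= 1 -> a <= q -> q < 1 ->
  (p - q) / (1 - q) <= (p - a) / (1 - a).
Proof.
move=> hp haq hq.
have ha1 : 1 - a != 0 by apply/eqP; lra.
have hq1 : 1 - q != 0 by apply/eqP; lra.
have -> : (p - q) / (1 - q) = (p - a) / (1 - a) - (1 - p) * (q - a) / ((1 - a) * (1 - q)).
  by field; apply/andP; split.
rewrite lerBlDr lerDl; apply: divr_ge0; first by apply: mulr_ge0; lra.
by apply: mulr_ge0; lra.
Qed.

Lemma sectA (R : realType) (X0 X1 : Type) (S : set (X0 * X1)) (r0 r : X0 -> X1 -> tlaw R)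
  x0 x1 t : compatible S r0 r -> S (x0, x1) -> S (x0, t) ->
  pY1D0 (r0 x0 t) <= prob (r x0 x1) (fun y0 _ _ => y0 == true) <= pY1 (r0 x0 t).
Proof.
case=> [[hd hci _] ho] hS ht.
rewrite (hci x0 x1 t true) //.
have e1 := ho x0 t true false ht; have e2 := ho x0 t true true ht.
have [d1 d2] := hd _ _ ht; dE d1 d2.
move: e1 e2; expand => e1 e2; apply/andP; split; lra.
Qed.

Lemma sectB (R : realType) (X0 X1 : Type) (S : set (X0 * X1)) (r0 r : X0 -> X1 -> tlaw R)
  x0 x1 t : compatible S r0 r -> S (x0, x1) -> S (t, x1) ->
  pY1D1 (r0 t x1) <= prob (r x0 x1) (fun _ y1 _ => y1 == true) <= pY1 (r0 t x1).
Proof.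
case=> [[hd _ hci] ho] hS ht.
rewrite (hci x0 t x1 true) //.
have e1 := ho t x1 true false ht; have e2 := ho t x1 true true ht.
have [d1 d2] := hd _ _ ht; dE d1 d2.
move: e1 e2; expand => e1 e2; apply/andP; split; lra.
Qed.

Definition modA (R : realType) (q : R) (m : tlaw R) : tlaw R := fun y0 y1 d =>
  if y0 && y1 && d then q - (m true true false + m true false false)
  else if ~~ y0 && y1 && d then
    m false true true + m true true true - (q - m true true false - m true false false)
  else m y0 y1 d.

Definition modB (R : realType) (q : R) (m : tlaw R) : tlaw R := fun y0 y1 d =>
  if y0 && y1 && ~~ d then q - (m true true true + m false true true)
  else if y0 && ~~ y1 && ~~ d then
    m true false false + m true true false - (q - m true true true - m false true true)
  else m y0 y1 d.



Section Mods.
Variables (R : realType) (q : R) (m : tlaw R).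
Hypotheses (hd : is_dist m) (hr : roy m).

Lemma modA_ok : pY1D0 m <= q <= pY1 m -> is_dist (modA q m) /\ roy (modA q m).
Proof.
dE hd hr; move: (hd) => [h0 _]; expand => /andP [hq1 hq2].
split; [split|].
- by case; case; case; rewrite /modA /=; lra.
- rewrite !big_bool /modA /=; lra.
- by move=> y0 y1 d; case: y0; case: y1; case: d => //= _; rewrite /modA /=; apply: hr.
Qed.

Lemma modB_ok : pY1D1 m <= q <= pY1 m -> is_dist (modB q m) /\ roy (modB q m).
Proof.
dE hd hr; move: (hd) => [h0 _]; expand => /andP [hq1 hq2].
split; [split|].
- by case; case; case; rewrite /modB /=; lra.
- rewrite !big_bool /modB /=; lra.
- by move=> y0 y1 d; case: y0; case: y1; case: d => //= _; rewrite /modB /=; apply: hr.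
Qed.

Lemma modA_Y0 v : prob (modA q m) (fun y0 _ _ => y0 == v) = if v then q else 1 - q.
Proof. dE hd hr; case: v; expand; rewrite /modA /=; lra. Qed.

Lemma modB_Y1 v : prob (modB q m) (fun _ y1 _ => y1 == v) = if v then q else 1 - q.
Proof. dE hd hr; case: v; expand; rewrite /modB /=; lra. Qed.

Lemma modA_Y1 v : prob (modA q m) (fun _ y1 _ => y1 == v) = prob m (fun _ y1 _ => y1 == v).
Proof. case: v; expand; rewrite /modA /=; lra. Qed.

Lemma modB_Y0 v : prob (modB q m) (fun y0 _ _ => y0 == v) = prob m (fun y0 _ _ => y0 == v).
Proof. case: v; expand; rewrite /modB /=; lra. Qed.

Lemma modA_obs y d : prob (modA q m) (fun a b c => (Yobs a b c == y) && (c == d)) =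
  prob m (fun a b c => (Yobs a b c == y) && (c == d)).
Proof. case: y; case: d; expand; rewrite /modA /=; lra. Qed.

Lemma modB_obs y d : prob (modB q m) (fun a b c => (Yobs a b c == y) && (c == d)) =
  prob m (fun a b c => (Yobs a b c == y) && (c == d)).
Proof. case: y; case: d; expand; rewrite /modB /=; lra. Qed.

Lemma modA_val : pY1_given_Y0_0 (modA q m) = (pY1 m - q) / (1 - q).
Proof. dE hd hr; expand; rewrite /modA /=; congr (_ / _); lra. Qed.

Lemma modB_val : pY0_given_Y1_0 (modB q m) = (pY1 m - q) / (1 - q).
Proof. dE hd hr; expand; rewrite /modB /=; congr (_ / _); lra. Qed.

End Mods.

Lemma sharpA (R : realType) (X0 X1 : Type) (S : set (X0 * X1)) (r0 : X0 -> X1 -> tlaw R)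
  x0 x1 q : roy_ci_model S r0 -> S (x0, x1) ->
  (forall t, S (x0, t) -> pY1D0 (r0 x0 t) <= q <= pY1 (r0 x0 t)) ->
  exists2 r, compatible S r0 r & pY1_given_Y0_0 (r x0 x1) = (pY1 (r0 x0 x1) - q) / (1 - q).
Proof.
move=> [hd hc0 hc1] hS hq.
pose r := fun a b => if pselect (a = x0) then modA q (r0 a b) else r0 a b.
have rY1 : forall a b v, S (a, b) ->
    prob (r a b) (fun _ y1 _ => y1 == v) = prob (r0 a b) (fun _ y1 _ => y1 == v).
  move=> a b v hab; rewrite /r; destruct (pselect (a = x0)) => //; exact: modA_Y1.
exists r; last first.
  have [d1 d2] := hd _ _ hS.
  by rewrite /r; destruct (pselect (x0 = x0)) => //; apply: modA_val.
split; first split.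
- move=> a b hab; rewrite /r; destruct (pselect (a = x0)) as [e|ne]; last exact: hd.
  subst a; have [d1 d2] := hd _ _ hab; exact: modA_ok (hq _ hab).
- move=> a b b' v hab hab'; rewrite /r; destruct (pselect (a = x0)) as [e|ne]; last exact: hc0.
  subst a; have [d1 d2] := hd _ _ hab; have [d1' d2'] := hd _ _ hab'.
  by rewrite !modA_Y0.
- by move=> a a' b v hab hab'; rewrite !rY1 //; apply: hc1.
- move=> a b y d hab; rewrite /r; destruct (pselect (a = x0)) => //; exact: modA_obs.
Qed.

Lemma sharpB (R : realType) (X0 X1 : Type) (S : set (X0 * X1)) (r0 : X0 -> X1 -> tlaw R)
  x0 x1 q : roy_ci_model S r0 -> S (x0, x1) ->
  (forall t, S (t, x1) -> pY1D1 (r0 t x1) <= q <= pY1 (r0 t x1)) ->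
  exists2 r, compatible S r0 r & pY0_given_Y1_0 (r x0 x1) = (pY1 (r0 x0 x1) - q) / (1 - q).
Proof.
move=> [hd hc0 hc1] hS hq.
pose r := fun a b => if pselect (b = x1) then modB q (r0 a b) else r0 a b.
have rY0 : forall a b v, S (a, b) ->
    prob (r a b) (fun y0 _ _ => y0 == v) = prob (r0 a b) (fun y0 _ _ => y0 == v).
  move=> a b v hab; rewrite /r; destruct (pselect (b = x1)) => //; exact: modB_Y0.
exists r; last first.
  have [d1 d2] := hd _ _ hS.
  by rewrite /r; destruct (pselect (x1 = x1)) => //; apply: modB_val.
split; first split.
- move=> a b hab; rewrite /r; destruct (pselect (b = x1)) as [e|ne]; last exact: hd.
  subst b; have [d1 d2] := hd _ _ hab; exact: modB_ok (hq _ hab).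
- by move=> a b b' v hab hab'; rewrite !rY0 //; apply: hc0.
- move=> a a' b v hab hab'; rewrite /r; destruct (pselect (b = x1)) as [e|ne]; last exact: hc1.
  subst b; have [d1 d2] := hd _ _ hab; have [d1' d2'] := hd _ _ hab'.
  by rewrite !modB_Y1.
- move=> a b y d hab; rewrite /r; destruct (pselect (b = x1)) => //; exact: modB_obs.
Qed.

Lemma compat_refl (R : realType) (X0 X1 : Type) (S : set (X0 * X1)) (r0 : X0 -> X1 -> tlaw R) :
  roy_ci_model S r0 -> compatible S r0 r0.
Proof. by move=> h; split. Qed.

Lemma valA (R : realType) (X0 X1 : Type) (S : set (X0 * X1)) (r0 r : X0 -> X1 -> tlaw R) x0 x1 :
  compatible S r0 r -> S (x0, x1) ->
  pY1_given_Y0_0 (r x0 x1) = (pY1 (r0 x0 x1) - prob (r x0 x1) (fun y0 _ _ => y0 == true))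
     / (1 - prob (r x0 x1) (fun y0 _ _ => y0 == true)).
Proof.
case=> [[hd _ _] ho] hS.
have e1 := ho x0 x1 true false hS; have e2 := ho x0 x1 true true hS.
have [d1 d2] := hd _ _ hS; dE d1 d2.
move: e1 e2; expand => e1 e2; congr (_ / _); lra.
Qed.

Lemma valB (R : realType) (X0 X1 : Type) (S : set (X0 * X1)) (r0 r : X0 -> X1 -> tlaw R) x0 x1 :
  compatible S r0 r -> S (x0, x1) ->
  pY0_given_Y1_0 (r x0 x1) = (pY1 (r0 x0 x1) - prob (r x0 x1) (fun _ y1 _ => y1 == true))
     / (1 - prob (r x0 x1) (fun _ y1 _ => y1 == true)).
Proof.
case=> [[hd _ _] ho] hS.
have e1 := ho x0 x1 true false hS; have e2 := ho x0 x1 true true hS.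
have [d1 d2] := hd _ _ hS; dE d1 d2.
move: e1 e2; expand => e1 e2; congr (_ / _); lra.
Qed.

Lemma pY1_01 (R : realType) (m : tlaw R) : is_dist m -> roy m -> 0 <= pY1 m <= 1.
Proof. move=> d1 d2; dE d1 d2; expand; apply/andP; split; lra. Qed.
Lemma pY1D0_01 (R : realType) (m : tlaw R) : is_dist m -> roy m -> 0 <= pY1D0 m <= 1.
Proof. move=> d1 d2; dE d1 d2; expand; apply/andP; split; lra. Qed.
Lemma pY1D1_01 (R : realType) (m : tlaw R) : is_dist m -> roy m -> 0 <= pY1D1 m <= 1.
Proof. move=> d1 d2; dE d1 d2; expand; apply/andP; split; lra. Qed.

Lemma boundsA (R : realType) (X0 X1 : Type) (S : set (X0 * X1)) (r0 r : X0 -> X1 -> tlaw R) x0 x1 :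
  S (x0, x1) -> compatible S r0 r ->
  q0_10_up S r0 x0 <= prob (r x0 x1) (fun y0 _ _ => y0 == true) <= q0_low S r0 x0.
Proof.
move=> hS hc; apply/andP; split.
- apply: ge_sup; first by exists (pY1D0 (r0 x0 x1)), x1.
  by move=> y [t ht <-]; case/andP: (@sectA _ _ _ _ _ _ x0 x1 t hc hS ht).
- apply: lb_le_inf; first by exists (pY1 (r0 x0 x1)), x1.
  by move=> y [t ht <-]; case/andP: (@sectA _ _ _ _ _ _ x0 x1 t hc hS ht).
Qed.

Lemma boundsB (R : realType) (X0 X1 : Type) (S : set (X0 * X1)) (r0 r : X0 -> X1 -> tlaw R) x0 x1 :
  S (x0, x1) -> compatible S r0 r ->
  q1_11_up S r0 x1 <= prob (r x0 x1) (fun _ y1 _ => y1 == true) <= q1_low S r0 x1.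
Proof.
move=> hS hc; apply/andP; split.
- apply: ge_sup; first by exists (pY1D1 (r0 x0 x1)), x0.
  by move=> y [t ht <-]; case/andP: (@sectB _ _ _ _ _ _ x0 x1 t hc hS ht).
- apply: lb_le_inf; first by exists (pY1 (r0 x0 x1)), x0.
  by move=> y [t ht <-]; case/andP: (@sectB _ _ _ _ _ _ x0 x1 t hc hS ht).
Qed.

Lemma qA (R : realType) (X0 X1 : Type) (S : set (X0 * X1)) (r0 : X0 -> X1 -> tlaw R) x0 t :
  roy_ci_model S r0 -> S (x0, t) ->
  (pY1D0 (r0 x0 t) <= q0_low S r0 x0 <= pY1 (r0 x0 t)) /\
  (pY1D0 (r0 x0 t) <= q0_10_up S r0 x0 <= pY1 (r0 x0 t)).
Proof.
move=> hm ht; have hc := compat_refl hm; have [hd _ _] := hm.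
have /andP [s1 s2] := sectA hc ht ht.
have /andP [b1 b2] := boundsA ht hc.
split; apply/andP; split.
- exact: le_trans b2.
- apply: ge_inf; last by exists t.
  exists 0 => y [t' ht' <-]; have [d1 d2] := hd _ _ ht'.
  by case/andP: (pY1_01 d1 d2).
- apply: ub_le_sup; last by exists t.
  exists 1 => y [t' ht' <-]; have [d1 d2] := hd _ _ ht'.
  by case/andP: (pY1D0_01 d1 d2).
- exact: le_trans s2.
Qed.

Lemma qB (R : realType) (X0 X1 : Type) (S : set (X0 * X1)) (r0 : X0 -> X1 -> tlaw R) t x1 :
  roy_ci_model S r0 -> S (t, x1) ->
  (pY1D1 (r0 t x1) <= q1_low S r0 x1 <= pY1 (r0 t x1)) /\
  (pY1D1 (r0 t x1) <= q1_11_up S r0 x1 <= pY1 (r0 t x1)).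
Proof.
move=> hm ht; have hc := compat_refl hm; have [hd _ _] := hm.
have /andP [s1 s2] := sectB hc ht ht.
have /andP [b1 b2] := boundsB ht hc.
split; apply/andP; split.
- exact: le_trans b2.
- apply: ge_inf; last by exists t.
  exists 0 => y [t' ht' <-]; have [d1 d2] := hd _ _ ht'.
  by case/andP: (pY1_01 d1 d2).
- apply: ub_le_sup; last by exists t.
  exists 1 => y [t' ht' <-]; have [d1 d2] := hd _ _ ht'.
  by case/andP: (pY1D1_01 d1 d2).
- exact: le_trans s2.
Qed.

Unset Implicit Arguments.

Theorem mainTheorem10 (R : realType) (X0 X1 : Type) (S : set (X0 * X1))
    (r0 : X0 -> X1 -> tlaw R) (x0 : X0) (x1 : X1) :
  roy_ci_model S r0 -> S (x0, x1) ->
  1 - q0_low S r0 x0 != 0 -> 1 - q0_10_up S r0 x0 != 0 ->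
  1 - q1_low S r0 x1 != 0 -> 1 - q1_11_up S r0 x1 != 0 ->
  let pi := pY1 (r0 x0 x1) in
  let L0 := (pi - q0_low S r0 x0) / (1 - q0_low S r0 x0) in
  let U0 := (pi - q0_10_up S r0 x0) / (1 - q0_10_up S r0 x0) in
  let L1 := (pi - q1_low S r0 x1) / (1 - q1_low S r0 x1) in
  let U1 := (pi - q1_11_up S r0 x1) / (1 - q1_11_up S r0 x1) in
  [/\ forall r, compatible S r0 r ->
        L0 <= pY1_given_Y0_0 (r x0 x1) <= U0 /\
        L1 <= pY0_given_Y1_0 (r x0 x1) <= U1,
      exists2 r, compatible S r0 r & pY1_given_Y0_0 (r x0 x1) = L0,
      exists2 r, compatible S r0 r & pY1_given_Y0_0 (r x0 x1) = U0,
      exists2 r, compatible S r0 r & pY0_given_Y1_0 (r x0 x1) = L1 &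
      exists2 r, compatible S r0 r & pY0_given_Y1_0 (r x0 x1) = U1].
Proof.
move=> hm hS h1 h2 h3 h4 pi L0 U0 L1 U1.
have [hd _ _] := hm; have [d1 d2] := hd _ _ hS.
have /andP [_ hpi] := pY1_01 d1 d2.
have [/andP [qa1 qa2] /andP [qa3 qa4]] := qA hm hS.
have [/andP [qb1 qb2] /andP [qb3 qb4]] := qB hm hS.
have lt1 : forall z : R, z <= 1 -> 1 - z != 0 -> z < 1.
  by move=> z hz /eqP hne; rewrite lt_neqAle hz andbT; apply/eqP => e; apply: hne; rewrite e subrr.
have l0 : q0_low S r0 x0 < 1 by apply: lt1 => //; exact: le_trans qa2 hpi.
have l1 : q1_low S r0 x1 < 1 by apply: lt1 => //; exact: le_trans qb2 hpi.
split.
- move=> r hc.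
  have /andP [a1 a2] := boundsA hS hc.
  have /andP [b1 b2] := boundsB hS hc.
  rewrite (valA hc hS) (valB hc hS); split; apply/andP; split.
  + exact: ratio_mono.
  + apply: ratio_mono => //; exact: le_lt_trans l0.
  + exact: ratio_mono.
  + apply: ratio_mono => //; exact: le_lt_trans l1.
- apply: sharpA => // t ht; exact: (qA hm ht).1.
- apply: sharpA => // t ht; exact: (qA hm ht).2.
- apply: sharpB => // t ht; exact: (qB hm ht).1.
- apply: sharpB => // t ht; exact: (qB hm ht).2.
Qed.
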